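(* Let $\{\tau_n\}_{n=1}^\infty$ be a sequence of nonnegative real numbers. Suppose that either $\liminf_{n\to\infty}\tau_n>0$, or that both of the following hold: (a) $\liminf_{n\to\infty} n\tau_n>0$, and (b) there is a constant $C\in(0,\infty)$ such that for each integer $n\ge 0$, if $2^{n-1}\le k<2^n$ then $C\tau_{2^{n-1}}\ge \tau_k\ge C^{-1}\tau_{2^n}$. Then $\{\tau_n\}$ satisfies Condition A.
   Context: ''Positive'' means nonnegative and ''increasing''/''decreasing'' mean non-decreasing/non-increasing. A nonnegative sequence $\{\tau_n\}_{n\ge1}$ satisfies Condition A if for every nonnegative non-increasing sequence $\{c_n\}_{n\ge1}$ such that $\sum_{n=1}^\infty \tau_n\min(nc_n,1)<\infty$, we also have $\sum_{n=1}^\infty \tau_n n c_n<\infty$. *)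

(* Defs.v *)
From Stdlib Require Import Reals.
From Coquelicot Require Import Coquelicot.
Open Scope R_scope.

(* Sequences indexed by n >= 1 are represented as functions nat -> R whose
   value at 0 is irrelevant. *)

Definition ConditionA (tau : nat -> R) : Prop :=
  forall c : nat -> R,
    (forall n, (1 <= n)%nat -> 0 <= c n) ->
    (forall n, (1 <= n)%nat -> c (S n) <= c n) ->
    ex_series (fun n => tau (S n) * Rmin (INR (S n) * c (S n)) 1) ->
    ex_series (fun n => tau (S n) * INR (S n) * c (S n)).

(* Main.v *)
Require Import Defs.
From Stdlib Require Import Reals Lra Lia Classical.
From Coquelicot Require Import Coquelicot.
Open Scope R_scope.

Lemma sum_lb (a : nat -> R) (n m : nat) (lb : R) : (n <= m)%nat ->
  (forall k, (n <= k <= m)%nat -> lb <= a k) ->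
  INR (S m - n) * lb <= sum_n_m a n m.
Proof.
  induction m as [|m IH]; intros Hnm H.
  - assert (n = 0%nat) by lia; subst. rewrite sum_n_n. simpl. 
    specialize (H 0%nat ltac:(lia)). lra.
  - destruct (Nat.eq_dec n (S m)) as [->|Hne].
    + rewrite sum_n_n. replace (S (S m) - S m)%nat with 1%nat by lia. simpl.
      specialize (H (S m) ltac:(lia)). lra.
    + rewrite sum_n_Sm by lia.
      replace (S (S m) - n)%nat with (S (S m - n)) by lia.
      rewrite S_INR. change plus with Rplus.
      assert (IH' : INR (S m - n) * lb <= sum_n_m a n m).
      { apply IH. lia. intros k Hk. apply H. lia. }
      specialize (H (S m)). assert (lb <= a (S m)) by (apply H; lia). lra.
Qed.

Lemma liminf_pos (u : nat -> R) : Rbar_lt 0 (LimInf_seq u) ->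
  exists d, 0 < d /\ exists N, forall n, (N <= n)%nat -> d <= u n.
Proof.
  intros H. destruct (ex_LimInf_seq u) as [l Hl].
  rewrite (is_LimInf_seq_unique _ _ Hl) in H.
  destruct l as [r| |]; simpl in *.
  - assert (Hr2 : 0 < r / 2) by lra.
    destruct (Hl (mkposreal _ Hr2)) as [_ [N HN]].
    exists (r/2). split; [lra|]. exists N. intros n Hn. specialize (HN n Hn). simpl in HN. lra.
  - destruct (Hl 1) as [N HN]. exists 1. split; [lra|]. exists N. intros n Hn.
    specialize (HN n Hn). lra.
  - contradiction.
Qed.

Lemma c_mono (c : nat -> R) : (forall n, (1 <= n)%nat -> c (S n) <= c n) ->
  forall a b, (1 <= a)%nat -> (a <= b)%nat -> c b <= c a.
Proof.
  intros Hc a b Ha Hab. induction Hab. lra.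
  specialize (Hc m ltac:(lia)). lra.
Qed.

Lemma main (tau : nat -> R) (d : R) (N : nat) : 0 < d ->
  (forall n, (N <= n)%nat -> d <= INR n * tau n) ->
  ConditionA tau.
Proof.
  intros Hd HN c Hc0 Hcm Hs.
  set (b := fun n => tau (S n) * Rmin (INR (S n) * c (S n)) 1) in *.
  assert (HM : exists M, forall n, (M <= n)%nat -> INR (S n) * c (S n) <= 1).
  { apply NNPP. intros Hno.
    assert (Hcs := Cauchy_ex_series _ Hs).
    assert (Hd4 : 0 < d / 4) by lra.
    destruct (Hcs (mkposreal _ Hd4)) as [K HK]. simpl in HK.
    assert (Hex : exists n, (2*K + 2*N + 2 <= n)%nat /\ 1 < INR (S n) * c (S n)).
    { apply NNPP. intros Hn. apply Hno. exists (2*K + 2*N + 2)%nat.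
      intros n Hn'. apply Rnot_lt_le. intros Hlt. apply Hn. exists n. split; auto. }
    destruct Hex as [n [Hn Hcn]].
    assert (Hm : exists m, (2 * m <= n <= 2 * m + 1)%nat).
    { destruct (Nat.Even_or_Odd n) as [[m Hm]|[m Hm]]; exists m; lia. }
    destruct Hm as [m Hm].
    assert (Hy : 0 < INR (S n)) by (apply lt_0_INR; lia).
    assert (Hlb := sum_lb b m n (d / (2 * INR (S n))) ltac:(lia)).
    assert (Hsum : INR (S n - m) * (d / (2 * INR (S n))) <= sum_n_m b m n).
    { apply Hlb. intros j Hj. unfold b.
      assert (Hx : 0 < INR (S j)) by (apply lt_0_INR; lia).
      assert (Hxy : INR (S j) <= INR (S n)) by (apply le_INR; lia).
      assert (Hcc : c (S n) <= c (S j)) by (apply c_mono; auto; lia).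
      assert (Hcn0 : 0 <= c (S n)) by (apply Hc0; lia).
      assert (Ht : d <= INR (S j) * tau (S j)) by (apply HN; lia).
      assert (Ht0 : 0 <= tau (S j)).
      { destruct (Rle_or_lt 0 (tau (S j))) as [h|h]; auto. nra. }
      assert (Hr : INR (S j) / (2 * INR (S n)) <= Rmin (INR (S j) * c (S j)) 1).
      { apply Rmin_glb.
        - apply Rmult_le_reg_r with (2 * INR (S n)). lra.
          unfold Rdiv. rewrite Rmult_assoc, Rinv_l by lra.
          assert (INR (S n) * c (S n) <= INR (S n) * c (S j)) by (apply Rmult_le_compat_l; lra).
          assert (INR (S j) * 1 <= INR (S j) * (INR (S n) * c (S j))) by (apply Rmult_le_compat_l; lra).
          nra.
        - apply Rmult_le_reg_r with (2 * INR (S n)). lra.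
          unfold Rdiv. rewrite Rmult_assoc, Rinv_l by lra. lra. }
      apply Rle_trans with (tau (S j) * (INR (S j) / (2 * INR (S n)))).
      - unfold Rdiv. rewrite <- Rmult_assoc. apply Rmult_le_compat_r.
        left. apply Rinv_0_lt_compat. lra. lra.
      - apply Rmult_le_compat_l; auto. }
    assert (Hcount : INR (S n) <= 2 * INR (S n - m)).
    { replace 2 with (INR 2) by (simpl; lra). rewrite <- mult_INR. apply le_INR. lia. }
    assert (Hq : d / 4 <= INR (S n - m) * (d / (2 * INR (S n)))).
    { apply Rmult_le_reg_r with (4 * INR (S n)). lra.
      replace (INR (S n - m) * (d / (2 * INR (S n))) * (4 * INR (S n)))
        with (2 * INR (S n - m) * d) by (field; lra). nra. }
    specialize (HK m n ltac:(lia) ltac:(lia)).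
    apply (Rlt_irrefl (d/4)). eapply Rle_lt_trans; [| exact HK].
    eapply Rle_trans; [exact Hq|]. eapply Rle_trans; [exact Hsum|].
    apply Rle_abs. }
  destruct HM as [M HM].
  apply (ex_series_incr_n _ M).
  apply (ex_series_incr_n _ M) in Hs.
  apply ex_series_ext with (2 := Hs).
  intros k. unfold b. rewrite Rmin_left. rewrite Rmult_assoc. reflexivity. apply HM; lia.
Qed.

Theorem proposition1 (tau : nat -> R)
  (Htau : forall n, (1 <= n)%nat -> 0 <= tau n) :
  (Rbar_lt 0 (LimInf_seq tau) \/
   (Rbar_lt 0 (LimInf_seq (fun n => INR n * tau n)) /\
    exists C : R, 0 < C /\
      forall n k : nat, (1 <= n)%nat ->
        (2 ^ (n - 1) <= k < 2 ^ n)%nat ->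
        C * tau (2 ^ (n - 1))%nat >= tau k /\ tau k >= / C * tau (2 ^ n)%nat)) ->
  ConditionA tau.
Proof.
  intros [H | [H _]].
  - destruct (liminf_pos _ H) as [d [Hd [N HN]]].
    apply (main tau d (N + 1)); auto.
    intros n Hn. specialize (HN n ltac:(lia)).
    assert (1 <= INR n) by (apply (le_INR 1); lia). nra.
  - destruct (liminf_pos _ H) as [d [Hd [N HN]]].
    apply (main tau d N); auto.
Qed.
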